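(* Consider $n$ agents with an undirected graph $\mathcal{G}$ on $\{1,\dots,n\}$ and neighbor sets $\mathcal{N}_i$, executing a distributed algorithm of the form $$\theta(k+1)=f(\theta(k),x(k)),\qquad x(k)=g(\theta(k),\eta(k)),\qquad k\in\mathbb{Z}_{\ge0},\qquad \theta(0)=\theta_0,$$ where $f,g:\mathbb{R}^n\times\mathbb{R}^n\to\mathbb{R}^n$ are continuous, the $i$th component of $f$ depends only on $\theta_i$ and $\{x_j\}_{j\in\mathcal{N}_i\cup\{i\}}$, the $i$th component of $g$ depends only on $\theta_i$ and $\eta_i$, and $\boldsymbol{\eta}=\{\eta(k)\}_{k\ge0}$ is a random noise sequence in $\mathbb{R}^n$ with an arbitrary distribution. Then, for any $\delta>0$ and any $\epsilon>0$, it is impossible that both (i) for every initial state $\theta_0\in\mathbb{R}^n$ and every $i\in\{1,\dots,n\}$, $\theta_i(k)$ converges in distribution to $\mathrm{Ave}(\theta_0)=\frac1n\mathbf{1}_n^T\theta_0$ as $k\to\infty$, and (ii) the algorithm is $\epsilon$-differentially private (with adjacency bound $\delta$).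
   Context: For a fixed initial state $\theta_0$, the message sequence $\mathbf{x}=\{x(k)\}_{k\ge0}$ is a deterministic function of the noise sequence; denote this map $X_{\theta_0}:(\mathbb{R}^n)^{\mathbb{N}}\to(\mathbb{R}^n)^{\mathbb{N}}$, $X_{\theta_0}(\boldsymbol{\eta})=\mathbf{x}$. Two initial states $\theta_0^{(1)},\theta_0^{(2)}\in\mathbb{R}^n$ are $\delta$-adjacent if there is $i_0$ with $|\theta^{(2)}_{0,i_0}-\theta^{(1)}_{0,i_0}|\le\delta$ and $\theta^{(2)}_{0,i}=\theta^{(1)}_{0,i}$ for all $i\ne i_0$. The algorithm is $\epsilon$-differentially private if for every pair of $\delta$-adjacent initial states and every Borel set $\mathcal{O}$ of $(\mathbb{R}^n)^{\mathbb{N}}$ (product topology), $\mathbb{P}\{\boldsymbol\eta: X_{\theta_0^{(1)}}(\boldsymbol\eta)\in\mathcal{O}\}\le e^{\epsilon}\,\mathbb{P}\{\boldsymbol\eta: X_{\theta_0^{(2)}}(\boldsymbol\eta)\in\mathcal{O}\}$. *)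

(* Defs.v *)
From Stdlib Require Import Reals Lra Arith.
Open Scope R_scope.

Definition Idx (n : nat) : Type := {i : nat | (i < n)%nat}.
Definition Vec (n : nat) : Type := Idx n -> R.

Definition Seq (n : nat) : Type := nat -> Vec n.

Definition coord (n : nat) (v : Vec n) (i : nat) : R :=
  match lt_dec i n with
  | left h => v (exist _ i h)
  | right _ => 0
  end.
Definition Ave (n : nat) (v : Vec n) : R :=
  / INR n * sum_f_R0 (coord n v) (pred n).

Definition continuous2 (n : nat) (h : Vec n -> Vec n -> Vec n) : Prop :=
  forall (a b : Vec n) (i : Idx n) (eps : R), 0 < eps ->
    exists d, 0 < d /\
      forall a' b' : Vec n,
        (forall j, Rabs (a' j - a j) < d) ->
        (forall j, Rabs (b' j - b j) < d) ->
        Rabs (h a' b' i - h a b i) < eps.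

Definition undirected (n : nat) (adj : Idx n -> Idx n -> Prop) : Prop :=
  forall i j, adj i j -> adj j i.

Definition f_local (n : nat) (adj : Idx n -> Idx n -> Prop)
  (f : Vec n -> Vec n -> Vec n) : Prop :=
  forall (th th' x x' : Vec n) (i : Idx n),
    th i = th' i ->
    (forall j, (adj i j \/ j = i) -> x j = x' j) ->
    f th x i = f th' x' i.

Definition g_local (n : nat) (g : Vec n -> Vec n -> Vec n) : Prop :=
  forall (th th' e e' : Vec n) (i : Idx n),
    th i = th' i -> e i = e' i -> g th e i = g th' e' i.

Fixpoint theta (n : nat) (f g : Vec n -> Vec n -> Vec n) (th0 : Vec n)
  (eta : Seq n) (k : nat) : Vec n :=
  match k with
  | O => th0
  | S k' => let t := theta n f g th0 eta k' in f t (g t (eta k'))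
  end.

Definition X (n : nat) (f g : Vec n -> Vec n -> Vec n) (th0 : Vec n)
  (eta : Seq n) : Seq n :=
  fun k => g (theta n f g th0 eta k) (eta k).

(** Product topology on (R^n)^N: open sets. *)
Definition is_open (n : nat) (O : Seq n -> Prop) : Prop :=
  forall s, O s -> exists (N : nat) (d : R), 0 < d /\
    forall t : Seq n,
      (forall k j, (k < N)%nat -> Rabs (t k j - s k j) < d) -> O t.

Definition sigma_algebra {T : Type} (S : (T -> Prop) -> Prop) : Prop :=
  S (fun _ => True) /\
  (forall A, S A -> S (fun x => ~ A x)) /\
  (forall A : nat -> T -> Prop, (forall m, S (A m)) ->
     S (fun x => exists m, A m x)).

Definition Borel (n : nat) (A : Seq n -> Prop) : Prop :=
  forall S : (Seq n -> Prop) -> Prop,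
    sigma_algebra S -> (forall O, is_open n O -> S O) -> S A.

(** Probability measure on the Borel sets of (R^n)^N
    (values on non-Borel sets are irrelevant). *)
Definition prob_measure (n : nat) (mu : (Seq n -> Prop) -> R) : Prop :=
  (forall A, Borel n A -> 0 <= mu A) /\
  mu (fun _ => True) = 1 /\
  (forall A : nat -> Seq n -> Prop,
     (forall m, Borel n (A m)) ->
     (forall m m' s, m <> m' -> A m s -> A m' s -> False) ->
     Un_cv (fun N => sum_f_R0 (fun m => mu (A m)) N)
           (mu (fun s => exists m, A m s))).

(** Convergence in distribution of real random variables Y_k to Y
    (defined on the probability space ((R^n)^N, Borel, mu)):
    the CDFs converge at every continuity point of the limit CDF. *)
Definition conv_in_dist (n : nat) (mu : (Seq n -> Prop) -> R)
  (Yk : nat -> Seq n -> R) (Y : Seq n -> R) : Prop :=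
  forall x : R,
    continuity_pt (fun t => mu (fun eta => Y eta <= t)) x ->
    Un_cv (fun k => mu (fun eta => Yk k eta <= x)) (mu (fun eta => Y eta <= x)).

Definition adjacent (n : nat) (delta : R) (t1 t2 : Vec n) : Prop :=
  exists i0 : Idx n, Rabs (t2 i0 - t1 i0) <= delta /\
    forall i, i <> i0 -> t2 i = t1 i.

Definition diff_private (n : nat) (f g : Vec n -> Vec n -> Vec n)
  (mu : (Seq n -> Prop) -> R) (eps delta : R) : Prop :=
  forall t1 t2 : Vec n, adjacent n delta t1 t2 ->
    forall O : Seq n -> Prop, Borel n O ->
      mu (fun eta => O (X n f g t1 eta)) <=
      exp eps * mu (fun eta => O (X n f g t2 eta)).

(* Main.v *)
Require Import Defs.
From Stdlib Require Import Reals Lra Lia Arith FunctionalExtensionality PropExtensionality.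
Open Scope R_scope.

Fixpoint phi (n : nat) (f : Vec n -> Vec n -> Vec n) (th0 : Vec n) (x : Seq n) (k : nat) : Vec n :=
  match k with
  | O => th0
  | S k' => f (phi n f th0 x k') (x k')
  end.

Lemma theta_phi n f g th0 eta k :
  theta n f g th0 eta k = phi n f th0 (X n f g th0 eta) k.
Proof.
  induction k as [|k IH]; [reflexivity|].
  cbn [theta phi]. rewrite <- IH. reflexivity.
Qed.

Lemma phi_local n adj f (Hfl : f_local n adj f) th1 th2 i :
  th1 i = th2 i -> forall k x, phi n f th1 x k i = phi n f th2 x k i.
Proof.
  intros H k x; induction k as [|k IH]; [exact H|].
  cbn [phi]. apply Hfl; [exact IH| intros; reflexivity].
Qed.

Lemma fin_min n (Q : Idx n -> R -> Prop) :
  (forall j d d', 0 < d' -> d' <= d -> Q j d -> Q j d') ->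
  (forall j, exists d, 0 < d /\ Q j d) -> exists d, 0 < d /\ forall j, Q j d.
Proof.
  intros Hm H.
  assert (A : forall m, exists d, 0 < d /\ forall j (hj : (j < n)%nat), (j < m)%nat -> Q (exist _ j hj) d).
  { induction m as [|m [d [Hd HQ]]].
    - exists 1; split; [lra| intros; lia].
    - destruct (lt_dec m n) as [hm|hm].
      + destruct (H (exist _ m hm)) as [dm [Hdm HQm]].
        exists (Rmin d dm); split; [apply Rmin_pos; assumption|].
        intros j hj hjm. destruct (Nat.eq_dec j m) as [e|e].
        * subst j. replace hj with hm by apply Peano_dec.le_unique.
          apply Hm with dm; [apply Rmin_pos; assumption| apply Rmin_r| exact HQm].
        * apply Hm with d; [apply Rmin_pos; assumption| apply Rmin_l| apply HQ; lia].
      + exists d; split; [exact Hd|]. intros j hj hjm. apply HQ; lia. }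
  destruct (A n) as [d [Hd HQ]]. exists d; split; [exact Hd|].
  intros [j hj]. apply HQ; exact hj.
Qed.

Lemma phi_cont n f (Hfc : continuous2 n f) th0 :
  forall k s eps, 0 < eps -> exists N d, 0 < d /\
    forall t, (forall k' j, (k' < N)%nat -> Rabs (t k' j - s k' j) < d) ->
      forall j, Rabs (phi n f th0 t k j - phi n f th0 s k j) < eps.
Proof.
  induction k as [|k IH]; intros s eps Heps.
  - exists O, 1; split; [lra|]. intros t _ j. cbn [phi].
    rewrite Rminus_diag, Rabs_R0; exact Heps.
  - destruct (fin_min n (fun j dl => forall a' b' : Vec n,
        (forall j', Rabs (a' j' - phi n f th0 s k j') < dl) ->
        (forall j', Rabs (b' j' - s k j') < dl) ->
        Rabs (f a' b' j - f (phi n f th0 s k) (s k) j) < eps)) as [dl [Hdl HQ]].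
    + intros j d d' Hd' Hle HQ a' b' Ha Hb. apply HQ; intro j';
        [specialize (Ha j') | specialize (Hb j')]; lra.
    + intros j. destruct (Hfc (phi n f th0 s k) (s k) j eps Heps) as [d [Hd Hc]].
      exists d; split; [exact Hd|]. intros a' b' Ha Hb. apply Hc; assumption.
    + destruct (IH s dl Hdl) as [N1 [d1 [Hd1 HI]]].
      exists (Nat.max N1 (S k)), (Rmin d1 dl); split; [apply Rmin_pos; assumption|].
      intros t Ht j. cbn [phi]. apply HQ.
      * apply HI. intros k' j' Hk'. specialize (Ht k' j' ltac:(lia)).
        pose proof (Rmin_l d1 dl); lra.
      * intro j'. specialize (Ht k j' ltac:(lia)). pose proof (Rmin_r d1 dl); lra.
Qed.

Lemma pred_ext {T : Type} (P Q : T -> Prop) : (forall x, P x <-> Q x) -> P = Q.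
Proof.
  intros H; apply functional_extensionality; intro x; apply propositional_extensionality; apply H.
Qed.

Lemma closed_borel n (F : Seq n -> R) c :
  (forall s eps, 0 < eps -> exists N d, 0 < d /\ forall t,
     (forall k j, (k < N)%nat -> Rabs (t k j - s k j) < d) -> Rabs (F t - F s) < eps) ->
  Borel n (fun x => F x <= c).
Proof.
  intros HF S [HT [HC HU]] Hop.
  replace (fun x => F x <= c) with (fun x => ~ (c < F x)).
  2:{ apply pred_ext; intro x; split; [apply Rnot_lt_le| apply Rle_not_lt]. }
  apply HC, Hop. intros s Hs.
  destruct (HF s (F s - c) ltac:(lra)) as [N [d [Hd H]]].
  exists N, d; split; [exact Hd|]. intros t Ht. specialize (H t Ht).
  apply Rabs_def2 in H. lra.
Qed.

Lemma empty_borel n : Borel n (fun _ => False).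
Proof. intros S HS Hop. apply Hop. intros s []. Qed.

Lemma const_sum_cv (m0 : R) : Un_cv (fun N => sum_f_R0 (fun _ => m0) N) m0 -> m0 = 0.
Proof.
  intros Hadd.
  destruct (Req_dec m0 0) as [E|E]; [exact E|].
  destruct (Hadd (Rabs m0 / 2)) as [N HN].
  { pose proof (Rabs_pos_lt m0 E); lra. }
  pose proof (HN N ltac:(lia)) as H1. pose proof (HN (S N) ltac:(lia)) as H2.
  unfold Rdist in *. cbn [sum_f_R0] in H2.
  set (u := sum_f_R0 (fun _ : nat => m0) N) in *.
  replace (u + m0 - m0) with u in H2 by ring.
  replace (u - m0) with (- (m0 - u)) in H1 by ring. rewrite Rabs_Ropp in H1.
  pose proof (Rabs_triang (m0 - u) u). replace (m0 - u + u) with m0 in H by ring. lra.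
Qed.

Lemma mu_empty n mu : prob_measure n mu -> mu (fun _ => False) = 0.
Proof.
  intros [_ [_ Hadd]].
  specialize (Hadd (fun _ _ => False) (fun _ => empty_borel n) ltac:(intros; contradiction)).
  assert (E2 : mu (fun s : Seq n => exists _ : nat, False) = mu (fun _ : Seq n => False)).
  { f_equal. apply pred_ext; intro; split; [intros [_ []]| contradiction]. }
  cbv beta in Hadd. rewrite E2 in Hadd. apply const_sum_cv; exact Hadd.
Qed.

Lemma cdf_const n (mu : (Seq n -> Prop) -> R) a x : a <> x ->
  continuity_pt (fun t => mu (fun _ : Seq n => a <= t)) x.
Proof.
  intros Hax eps Heps. exists (Rabs (a - x)); split.
  { apply Rabs_pos_lt; intro; apply Hax; lra. }
  intros y [_ Hy]. simpl in *. unfold Rdist in *.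
  replace (fun _ : Seq n => a <= y) with (fun _ : Seq n => a <= x).
  { rewrite Rminus_diag, Rabs_R0; exact Heps. }
  apply pred_ext; intros _.
  destruct (Rle_dec a x); destruct (Rle_dec x y);
  repeat match goal with H : context [Rabs ?z] |- _ => 
     let H' := fresh in destruct (Rabs_def2 _ _ H) as [? ?]; clear H end;
  try (unfold Rabs in *; destruct (Rcase_abs _) in *);
  split; intro; lra.
Qed.

Lemma sum_single h a : forall N,
  (forall m, h m = if Nat.eqb m 0 then a else 0) -> sum_f_R0 h N = a.
Proof.
  intros N H; induction N as [|N IH].
  - simpl. rewrite H. reflexivity.
  - cbn [sum_f_R0]. rewrite IH, H. simpl. ring.
Qed.

Theorem mainTheorem1 (n : nat) (Hn : (2 <= n)%nat)
  (adj : Idx n -> Idx n -> Prop) (Hadj : undirected n adj)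
  (f g : Vec n -> Vec n -> Vec n)
  (Hfc : continuous2 n f) (Hgc : continuous2 n g)
  (Hfl : f_local n adj f) (Hgl : g_local n g)
  (mu : (Seq n -> Prop) -> R) (Hmu : prob_measure n mu)
  (delta eps : R) (Hdelta : 0 < delta) (Heps : 0 < eps) :
  ~ ((forall (th0 : Vec n) (i : Idx n),
        conv_in_dist n mu (fun k eta => theta n f g th0 eta k i)
                          (fun _ => Ave n th0)) /\
     diff_private n f g mu eps delta).
Proof.
  intros [Hconv Hdp].
  set (th1 := fun _ : Idx n => 0).
  set (th2 := fun j : Idx n => if Nat.eqb (proj1_sig j) 0 then delta else 0).
  assert (h0 : (0 < n)%nat) by lia. assert (h1 : (1 < n)%nat) by lia.
  set (i0 := exist (fun i => (i < n)%nat) 0%nat h0).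
  set (i := exist (fun i => (i < n)%nat) 1%nat h1).
  assert (Hn0 : 0 < INR n) by (apply lt_0_INR; lia).
  assert (A1 : Ave n th1 = 0).
  { unfold Ave. rewrite (sum_single _ 0). ring.
    intro m. unfold coord, th1. destruct (lt_dec m n); destruct (Nat.eqb m 0); reflexivity. }
  assert (A2 : Ave n th2 = / INR n * delta).
  { unfold Ave. rewrite (sum_single _ delta). reflexivity.
    intro m. unfold coord, th2. destruct (lt_dec m n) as [h|h]; simpl;
      destruct (Nat.eqb m 0) eqn:E; try reflexivity.
    apply Nat.eqb_eq in E; lia. }
  assert (Hp : 0 < / INR n * delta) by (apply Rmult_lt_0_compat; [apply Rinv_0_lt_compat|]; lra).
  set (c := / INR n * delta / 2).
  assert (Hadjc : adjacent n delta th1 th2).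
  { exists i0. split.
    - unfold th1, th2, i0; simpl. rewrite Rminus_0_r, Rabs_right; lra.
    - intros [j hj] Hj. unfold th2, th1; simpl. destruct (Nat.eqb j 0) eqn:E; [|reflexivity].
      apply Nat.eqb_eq in E; subst j. exfalso; apply Hj. unfold i0. f_equal; apply Peano_dec.le_unique. }
  assert (Hi : th1 i = th2 i) by reflexivity.
  set (P1 := fun k => mu (fun eta => theta n f g th1 eta k i <= c)).
  set (P2 := fun k => mu (fun eta => theta n f g th2 eta k i <= c)).
  assert (Hle : forall k, P1 k <= exp eps * P2 k).
  { intro k. set (O := fun x : Seq n => phi n f th1 x k i <= c).
    assert (HB : Borel n O).
    { apply closed_borel. intros s e He.
      destruct (phi_cont n f Hfc th1 k s e He) as [N [d [Hd H]]].
      exists N, d; split; [exact Hd|]. intros t Ht; apply H; exact Ht. }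
    pose proof (Hdp th1 th2 Hadjc O HB) as H.
    replace (fun eta => O (X n f g th1 eta)) with (fun eta => theta n f g th1 eta k i <= c) in H.
    2:{ apply pred_ext; intro eta; unfold O; rewrite theta_phi; reflexivity. }
    replace (fun eta => O (X n f g th2 eta)) with (fun eta => theta n f g th2 eta k i <= c) in H.
    2:{ apply pred_ext; intro eta; unfold O; rewrite theta_phi, (phi_local n adj f Hfl th1 th2 i Hi); reflexivity. }
    exact H. }
  pose proof (Hconv th1 i c) as C1. pose proof (Hconv th2 i c) as C2.
  rewrite A1 in C1. rewrite A2 in C2.
  specialize (C1 (cdf_const n mu 0 c ltac:(unfold c; lra))).
  specialize (C2 (cdf_const n mu (/ INR n * delta) c ltac:(unfold c; lra))).
  replace (fun _ : Seq n => 0 <= c) with (fun _ : Seq n => True) in C1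
    by (apply pred_ext; intros; split; intros; unfold c in *; lra).
  replace (fun _ : Seq n => / INR n * delta <= c) with (fun _ : Seq n => False) in C2
    by (apply pred_ext; intros; split; intros; unfold c in *; [contradiction|lra]).
  destruct Hmu as [Hpos [HT Hadd]] eqn:EE.
  rewrite HT in C1. rewrite (mu_empty n mu Hmu) in C2.
  pose proof (exp_pos eps) as He.
  destruct (C1 (1/2) ltac:(lra)) as [N1 H1].
  destruct (C2 (/ (2 * exp eps))) as [N2 H2].
  { apply Rinv_0_lt_compat; lra. }
  specialize (H1 (Nat.max N1 N2) ltac:(lia)). specialize (H2 (Nat.max N1 N2) ltac:(lia)).
  specialize (Hle (Nat.max N1 N2)). unfold Rdist in *. fold (P1 (Nat.max N1 N2)) in H1.
  fold (P2 (Nat.max N1 N2)) in H2.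
  apply Rabs_def2 in H1. apply Rabs_def2 in H2. destruct H1, H2.
  assert (exp eps * P2 (Nat.max N1 N2) < exp eps * / (2 * exp eps)).
  { apply Rmult_lt_compat_l; lra. }
  replace (exp eps * / (2 * exp eps)) with (1/2) in H3 by (field; lra).
  lra.
Qed.
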